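(* Let $G$ satisfy conditions (1)–(5) below and let $C_G\subset\mathbb{P}^n$, $n=d-g$, be the union of lines defined by an admissible labeling of $\tilde G$ (see context). Then $C_G$ is arithmetically Cohen–Macaulay, i.e. the restriction map $H^0(\mathbb{P}^n,\mathcal{O}_{\mathbb{P}^n}(k))\to H^0(C_G,\mathcal{O}_{C_G}(k))$ is surjective for all $k\ge 0$.
   Context: Work over an algebraically closed field of characteristic zero, $S=k[x_0,\ldots,x_{d-g}]$. Conditions on the finite graph $G=(V,E)$, $d=|V|$, $g=|E|-d+1$: (1) connected; (2) simple; (3) every vertex has degree at most $3$ and some vertex has degree less than $3$; (4) the shortest path between any two distinct vertices of degree $3$ has at least $3$ edges; (5) no triangles. Let $\tilde G$ be obtained from $G$ by attaching one loop at each vertex of degree $1$. An admissible labeling of the edges of $\tilde G$: for each vertex of degree $3$ choose two indices $j\neq k$ in $\{0,\ldots,d-g\}$ and label its three edges $e_j,e_k,e_j-e_k$; label each remaining edge $e_i$ with an unused index, distinct indices being used throughout. An index $i$ appears on an edge labeled $e_i$ or $\pm(e_i-e_j)$. For each vertex $v$: if $v$ has degree $3$ with edges $e_j,e_k,e_j-e_k$, $I_v=(x_i: i\neq j,k)$; otherwise $I_v$ is generated by the $x_i$ with $i$ not appearing on an edge of $\tilde G$ at $v$, together with $x_j-x_k$ if some edge at $v$ is labeled $e_j-e_k$. $L_v=V(I_v)$, $C_G=\bigcup_v L_v$. *)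

(* Defs.v *)
From HB Require Import structures.
From mathcomp Require Import all_boot all_order all_algebra.
From mathcomp Require Import mpoly.
Set Implicit Arguments. Unset Strict Implicit. Unset Printing Implicit Defensive.
Import GRing.Theory.
Local Open Scope ring_scope.

Section Graph.
Variables (V : finType) (adj : rel V).

Definition nbhd (v : V) : {set V} := [set w | adj v w].
Definition deg (v : V) : nat := #|nbhd v|.
Definition edges : {set {set V}} :=
  [set e : {set V} | [exists x, exists y, adj x y && (e == [set x; y])]].
Definition genus : int := (#|edges|%:Z - #|V|%:Z + 1)%R.

Definition connected_graph : Prop := forall u v, connect adj u v.
Definition simple_graph : Prop := ssrbool.symmetric adj /\ irreflexive adj.
Definition degree_cond : Prop := (forall v, deg v <= 3)%N /\ exists v, (deg v < 3)%N.
Definition deg3_far : Prop :=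
  forall u v, u != v -> deg u = 3%N -> deg v = 3%N ->
    ~~ adj u v /\ (forall w, ~~ (adj u w && adj w v)).
Definition triangle_free : Prop := forall a b c, ~~ [&& adj a b, adj b c & adj c a].
End Graph.

Inductive label (m : nat) := LE of 'I_m | LD of 'I_m & 'I_m.
(* LE i stands for e_i ; LD j k stands for e_j - e_k *)

Section Labeling.
Variables (V : finType) (adj : rel V) (m : nat).
(* lab u v : label of the edge {u,v} of G (meaningful when adj u v);
   loopl v : label of the loop attached at v (meaningful when deg v = 1). *)
Variables (lab : V -> V -> label m) (loopl : V -> label m).

Definition at_v (v : V) (l : label m) : Prop :=
  (exists w, adj v w /\ lab v w = l) \/ (deg adj v = 1%N /\ loopl v = l).

Definition appears (i : 'I_m) (l : label m) : Prop :=
  l = LE i \/ exists j, l = LD i j \/ l = LD j i.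

Definition admissible : Prop :=
  [/\
      forall u v, adj u v -> lab u v = lab v u,
      forall v, deg adj v = 3%N -> exists j k, j != k /\
        exists a b c, [/\ nbhd adj v = [set a; b; c], lab v a = LE j, lab v b = LE k
                        & lab v c = LD j k \/ lab v c = LD k j],
      (forall u v, adj u v -> deg adj u <> 3%N -> deg adj v <> 3%N ->
         exists i, lab u v = LE i)
      /\ (forall v, deg adj v = 1%N -> exists i, loopl v = LE i)
    &
      [/\ forall u v u' v' i, adj u v -> adj u' v' -> lab u v = LE i -> lab u' v' = LE i ->
            [set u; v] = [set u'; v'],
          forall u v w i, adj u v -> deg adj w = 1%N -> lab u v = LE i -> loopl w <> LE i
        & forall w w' i, deg adj w = 1%N -> deg adj w' = 1%N ->
            loopl w = LE i -> loopl w' = LE i -> w = w']].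

Variable K : fieldType.

(* p (a point of the affine cone over P^(m-1)) lies on L_v = V(I_v) *)
Definition onL (v : V) (p : 'I_m -> K) : Prop :=
  if deg adj v == 3%N then
    forall i, ~ at_v v (LE i) -> p i = 0
  else
    (forall i, ~ (exists l, at_v v l /\ appears i l) -> p i = 0)
    /\ (forall j k, at_v v (LD j k) -> p j = p k).

(* the homogeneous ideal I(C_G) of C_G = \bigcup_v L_v (reduced structure) *)
Definition inIC (F : {mpoly K[m]}) : Prop :=
  forall v (p : 'I_m -> K), onL v p -> F.@[p] = 0.

(* An element of H^0(C_G, O_{C_G}(k)), described on the standard affine cover
   D_+(x_i): on D_+(x_i), a section of (S/I_C)~(k) is F_i / x_i^(e_i) with
   F_i homogeneous of degree k + e_i; they must agree in (S/I_C)_{x_i x_j}. *)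
Definition global_section (k : nat) (F : 'I_m -> {mpoly K[m]}) (e : 'I_m -> nat) : Prop :=
  (forall i, F i \is (k + e i)%N.-homog) /\
  (forall i j, exists N : nat,
      inIC (('X_i * 'X_j) ^+ N * (F i * 'X_j ^+ e j - F j * 'X_i ^+ e i))).

Definition restriction_surjective (k : nat) : Prop :=
  forall F e, global_section k F e ->
    exists H : {mpoly K[m]}, H \is k.-homog /\
      forall i, exists N : nat, inIC ('X_i ^+ N * (H * 'X_i ^+ e i - F i)).

End Labeling.

(* Main.v *)
Require Import Defs.
From HB Require Import structures.
From mathcomp Require Import all_boot all_order all_algebra.
From mathcomp Require Import mpoly.
From mathcomp Require Import ring.
From Stdlib Require Import Classical ClassicalEpsilon.
Local Open Scope ring_scope.

Module Aux.
Set Implicit Arguments. Unset Strict Implicit. Unset Printing Implicit Defensive.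
Import GRing.Theory.
Section Analysis.
Variable K : fieldType.
Variable m : nat.

Definition lp (F : {mpoly K[m]}) (u w : 'I_m -> K) : {poly K} :=
  mmap polyC (fun i => (u i)%:P + (w i) *: 'X) F.

Lemma lpE F u w t : (lp F u w).[t] = F.@[fun i => u i + t * w i].
Proof.
rewrite /lp /mmap mevalE -horner_evalE rmorph_sum /=.
apply: eq_bigr => mm _; rewrite rmorphM /= horner_evalE hornerC /mmap1 rmorph_prod.
congr (_ * _); apply: eq_bigr => i _; rewrite rmorphXn /= horner_evalE.
by rewrite hornerD hornerC hornerZ hornerX mulrC.
Qed.

Lemma homog_eval d (F : {mpoly K[m]}) c p : F \is d.-homog ->
  F.@[fun i => c * p i] = c ^+ d * F.@[p].
Proof.
move=> hF; rewrite !mevalE mulr_sumr; apply: eq_big_seq => mm hm.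
rewrite (eq_bigr (fun i => c ^+ mm i * p i ^+ mm i)); last by move=> i _; rewrite exprMn.
by rewrite big_split /= prodrXr -mdegE (dhomog_mf hF hm) mulrCA.
Qed.

Lemma lp_size d F u w : F \is d.-homog -> (size (lp F u w) <= d.+1)%N.
Proof.
move=> hF; rewrite /lp /mmap; apply: leq_trans (size_sum _ _ _) _.
apply/bigmax_leqP_seq => mm hm _.
apply: leq_trans (size_mul_leq _ _) _.
rewrite size_polyC.
have h1 : (size (mmap1 (fun i => ((u i)%:P + w i *: 'X)%R) mm) <= d.+1)%N.
  rewrite /mmap1; apply: leq_trans (size_poly_prod_leq _ _) _.
  have hs : forall i : 'I_m, (size (((u i)%:P + w i *: 'X) ^+ mm i)%R <= (mm i).+1)%N.
    move=> i; apply: leq_trans (size_poly_exp_leq _ _) _.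
    have : (size ((u i)%:P + w i *: 'X)%R <= 2)%N.
      apply: leq_trans (size_polyD _ _) _; rewrite geq_max.
      rewrite (leq_trans (size_polyC_leq1 _)) //.
      by apply: leq_trans (size_scale_leq _ _) _; rewrite size_polyX.
    move=> h2; rewrite ltnS; case: (size _) h2 => [|[|[|]]] //= _; by rewrite mul1n.

  have hsum : ((\sum_(i < m) size (((u i)%:P + w i *: 'X) ^+ mm i)%R).+1 <=
      (\sum_(i < m) (mm i).+1).+1)%N.
    by rewrite ltnS; apply: leq_sum => i _; exact: hs.
  apply: leq_trans (leq_sub2r _ hsum) _.
  rewrite (eq_bigr (fun i => mm i + 1)%N); last by move=> i _; rewrite addn1.
  rewrite big_split /= sum1_card cardT size_enum_ord -mdegE (dhomog_mf hF hm).
  by rewrite -addSn addnK.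
case: (_ != 0); rewrite /= ?add1n //.
by rewrite add0n (leq_trans (leq_pred _)).
Qed.

Hypothesis hK : [pchar K] =i pred0.

Lemma poly_nz0 (p : {poly K}) : (forall t, t != 0 -> p.[t] = 0) -> p = 0.
Proof.
move=> hp; apply/eqP; apply: contraT => pn0.
have := @max_poly_roots _ p [seq (i.+1)%:R | i <- iota 0 (size p)] pn0.
rewrite size_map size_iota ltnn; apply.
  apply/allP => x /mapP [i _ ->]; apply/eqP; apply: hp.
  by have /pcharf0P -> := hK.
rewrite map_inj_in_uniq ?iota_uniq // => i j _ _ /eqP.
have hc := (pcharf0P _).1 hK.
wlog lij : i j / (i <= j)%N.
  move=> H; case/orP: (leq_total i j) => hij; first exact: H.
  by rewrite eq_sym => /H ->.
move=> /eqP h; have : (j - i)%:R == 0 :> K.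
  have h' : i%:R = j%:R :> K by apply: (addIr 1); rewrite !natr1.
  by rewrite natrB // h' subrr.
by rewrite hc subn_eq0 => hji; apply/eqP; rewrite eqn_leq lij hji.
Qed.

End Analysis.

Section Local.
Variable K : fieldType.
Hypothesis hK : [pchar K] =i pred0.
Variable m : nat.
Variables (F : 'I_m -> {mpoly K[m]}) (e : 'I_m -> nat) (k : nat).
Hypothesis hom : forall i, F i \is (k + e i)%N.-homog.
Variables (i0 q : 'I_m) (be : 'I_m -> K).
Hypotheses (hiq : i0 != q) (hb0 : be i0 = 0) (hb1 : be q = 1).

Definition al : 'I_m -> K := fun i => (i == i0)%:R.
Definition pt (a b : K) : 'I_m -> K := fun i => a * al i + b * be i.

Hypothesis compat : forall a b i j, pt a b i != 0 -> pt a b j != 0 ->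
  (F i).@[pt a b] * (pt a b j) ^+ e j = (F j).@[pt a b] * (pt a b i) ^+ e i.

Lemma pt_i0 a b : pt a b i0 = a.
Proof. by rewrite /pt /al eqxx hb0 mulr1 mulr0 addr0. Qed.
Lemma pt_q a b : pt a b q = b.
Proof. by rewrite /pt /al eq_sym (negbTE hiq) hb1 mulr0 add0r mulr1. Qed.

Definition Tf (P : {poly K}) a b := \sum_(c < k.+1) P`_c * a ^+ c * b ^+ (k - c).

Lemma local_lemma : exists P : {poly K}, (size P <= k.+1)%N /\
  forall a b i, pt a b i != 0 -> Tf P a b * (pt a b i) ^+ e i = (F i).@[pt a b].
Proof.
pose Pq := lp (F q) be al.
have PqE t : Pq.[t] = (F q).@[pt t 1].
  by rewrite lpE; apply: meval_eq => i; rewrite /pt mul1r addrC.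
pose R := lp (F i0) be al.
have RE t : R.[t] = (F i0).@[pt t 1].
  by rewrite lpE; apply: meval_eq => i; rewrite /pt mul1r addrC.
have hR : R = Pq * 'X^(e i0).
  apply/eqP; rewrite -subr_eq0; apply/eqP; apply: (poly_nz0 hK) => t t0.
  rewrite hornerD hornerN hornerM hornerXn PqE RE.
  have := compat (i:=i0) (j:=q) (a:=t) (b:=1); rewrite pt_i0 pt_q expr1n mulr1.
  by move=> -> //; rewrite ?subrr // oner_neq0.
have szP : (size Pq <= k.+1)%N.
  have := lp_size be al (hom i0); rewrite -/R hR.
  have [->|pn0] := eqVneq Pq 0; first by rewrite size_poly0.
  by rewrite size_mulXn // -addSn addnC leq_add2r.
have TE a b : b != 0 -> Tf Pq a b = b ^+ k * Pq.[a / b].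
  move=> b0; rewrite (horner_coef_wide _ szP) mulr_sumr; apply: eq_bigr => c _.
  have hc : (c <= k)%N by rewrite -ltnS.
  rewrite mulrCA -mulrA; congr (_ * _).
  have -> : b ^+ k = b ^+ (k - c) * b ^+ c by rewrite -exprD subnK.
  rewrite expr_div_n mulrCA -mulrA mulfV ?mulr1 //.
  by rewrite expf_neq0.
have C1 a b : b != 0 -> Tf Pq a b * b ^+ e q = (F q).@[pt a b].
  move=> b0.
  have -> : (F q).@[pt a b] = (F q).@[fun i => b * pt (a / b) 1 i].
    apply: meval_eq => i; rewrite /pt mulrDr mul1r mulrA mulrCA mulfV // mulr1.
    by [].
  by rewrite (homog_eval _ _ (hom q)) -PqE TE // exprD mulrAC.
have C2 a b i : b != 0 -> pt a b i != 0 ->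
    Tf Pq a b * (pt a b i) ^+ e i = (F i).@[pt a b].
  move=> b0 pi0; apply: (mulIf (expf_neq0 (e q) b0)).
  have := compat (j:=q) pi0; rewrite pt_q => /(_ b0) ->.
  by rewrite -C1 // mulrAC.
have C3 a : a != 0 -> Tf Pq a 0 * a ^+ e i0 = (F i0).@[pt a 0].
  move=> a0.
  pose U := lp (F i0) (fun i => a * al i) be.
  pose W := \sum_(c < k.+1) (Pq`_c * a ^+ c * a ^+ e i0) *: 'X^(k - c).
  have WE b : W.[b] = Tf Pq a b * a ^+ e i0.
    rewrite /W /Tf -horner_evalE rmorph_sum mulr_suml; apply: eq_bigr => c _.
    by rewrite /= horner_evalE hornerZ hornerXn mulrAC.
  have UE b : U.[b] = (F i0).@[pt a b].
    by rewrite lpE.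
  have hUW : U = W.
    apply/eqP; rewrite -subr_eq0; apply/eqP; apply: (poly_nz0 hK) => b b0.
    rewrite hornerD hornerN UE WE.
    by have := C2 a b i0 b0; rewrite pt_i0 => -> //; rewrite subrr.
  by rewrite -WE -UE hUW.
exists Pq; split => // a b i pi0.
have [b0|b0] := eqVneq b 0; last exact: C2.
subst b.
have hpi : pt a 0 i = a * al i by rewrite /pt mul0r addr0.
have a0 : a != 0 by apply: contraNneq pi0 => ha; rewrite hpi ha mul0r.
have pi00 : pt a 0 i0 != 0 by rewrite pt_i0.
apply: (mulIf (expf_neq0 (e i0) a0)).
have := compat pi0 pi00; rewrite pt_i0 => ->.
by rewrite -C3 // mulrAC.
Qed.

End Local.

Section Graph.
Variable K : fieldType.
Variables (V : finType) (adj : rel V) (m : nat).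
Variables (lab : V -> V -> label m) (loopl : V -> label m).
Hypotheses (hsimp : simple_graph adj) (hdeg : degree_cond adj)
  (hfar : deg3_far adj) (htri : triangle_free adj)
  (hadm : admissible adj lab loopl).

Local Notation onl := (@onL V adj m lab loopl K).
Local Notation atv := (at_v adj lab loopl).
Local Notation dg := (deg adj).

Lemma adjC u v : adj u v -> adj v u.
Proof. by case: hsimp => hs _; rewrite hs. Qed.

Lemma adj_irr u : ~~ adj u u.
Proof. by case: hsimp => _ hi; rewrite hi. Qed.

Lemma adj_neq u v : adj u v -> u != v.
Proof. by move=> h; apply: contraTneq h => ->; exact: adj_irr. Qed.

Lemma labC u v : adj u v -> lab u v = lab v u.
Proof. by case: hadm => h _ _ _; apply: h. Qed.

Lemma in_nbhd u w : (w \in nbhd adj u) = adj u w.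
Proof. by rewrite inE. Qed.

Lemma LE_inj (i j : 'I_m) : LE i = LE j -> i = j.
Proof. by case. Qed.

Lemma LD_inj (i j i' j' : 'I_m) : LD i j = LD i' j' -> i = i' /\ j = j'.
Proof. by case. Qed.

Lemma loop_LE u : dg u = 1%N -> exists i, loopl u = LE i.
Proof. by case: hadm => _ _ [_ h] _; apply: h. Qed.

Lemma far_adj u v : dg u = 3%N -> dg v = 3%N -> ~~ adj u v.
Proof.
move=> hu hv; have [->|nuv] := eqVneq u v; first exact: adj_irr.
by case: (hfar nuv hu hv).
Qed.

Lemma far2 u v w : dg u = 3%N -> dg v = 3%N -> adj w u -> adj w v -> u = v.
Proof.
move=> hu hv hwu hwv; apply/eqP; apply/negPn/negP => nuv.
case: (hfar nuv hu hv) => _ /(_ w).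
by rewrite (adjC hwu) hwv.
Qed.

Lemma notri u v w : adj u v -> adj v w -> adj w u -> False.
Proof. by move=> h1 h2 h3; have := htri u v w; rewrite h1 h2 h3. Qed.

Lemma LD_edge u w x y : adj u w -> lab u w = LD x y -> dg u != 3%N -> dg w = 3%N.
Proof.
move=> huw hl hu; apply/eqP/negPn/negP => hw.
case: hadm => _ _ [h _] _.
have [i hi] := h u w huw (elimN eqP hu) (elimN eqP hw).
by rewrite hl in hi.
Qed.

Lemma at_LD u x y : dg u != 3%N -> atv u (LD x y) ->
  exists w, [/\ adj u w, lab u w = LD x y & dg w = 3%N].
Proof.
move=> hu [[w [huw hl]]|[h1 hl]].
  by exists w; split => //; apply: LD_edge hl hu.
by have [i hi] := loop_LE h1; rewrite hl in hi.
Qed.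

Lemma d3_LD_idx w u x y : dg w = 3%N -> adj w u -> lab w u = LD x y ->
  [/\ x != y, atv w (LE x), atv w (LE y) &
      forall i, atv w (LE i) -> i = x \/ i = y].
Proof.
move=> hw hwu hl; case: hadm => _ h3 _ _.
have [j [k [njk [a [b [c [hn ha hb hc]]]]]]] := h3 w hw.
have mem z : adj w z -> z = a \/ z = b \/ z = c.
  rewrite -in_nbhd hn !inE; case: (z =P a) => [->|_] /=; auto.
  by case: (z =P b) => [->|_] /=; auto; move/eqP; auto.
have hwa : adj w a by rewrite -in_nbhd hn !inE eqxx.
have hwb : adj w b by rewrite -in_nbhd hn !inE eqxx orbT.
have allLE i : atv w (LE i) -> i = j \/ i = k.
  move=> [[z [hz hl']]|[h1 _]]; last by rewrite hw in h1.
  case: (mem z hz) => [e|[e|e]]; subst z; rewrite ?ha ?hb in hl'.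
  - by left; apply: LE_inj.
  - by right; apply: LE_inj.
  - by case: hc hl' => ->.
have atj : atv w (LE j) by left; exists a.
have atk : atv w (LE k) by left; exists b.
case: (mem u hwu) => [ea|[eb|ec]].
- by rewrite ea ha in hl.
- by rewrite eb hb in hl.
subst u; case: hc => hc; rewrite hc in hl; case: (LD_inj hl) => <- <-.
  by split => //.
split => //; first by rewrite eq_sym.
by move=> i /allLE [] ->; auto.
Qed.

Lemma uniqLE u u' i : atv u (LE i) -> atv u' (LE i) -> u != u' ->
  adj u u' /\ lab u u' = LE i.
Proof.
case: hadm => _ _ _ [h1 h2 h3].
move=> [[w [huw hl]]|[d1 hl]] [[w' [huw' hl']]|[d1' hl']] nuu'.
- have E := h1 _ _ _ _ _ huw huw' hl hl'.
  have : u \in [set u'; w'] by rewrite -E !inE eqxx.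
  rewrite !inE (negbTE nuu') /= => /eqP eu.
  have : u' \in [set u; w] by rewrite E !inE eqxx.
  rewrite !inE eq_sym (negbTE nuu') /= => /eqP ew.
  by subst; split.
- by case: (h2 _ _ _ _ huw d1' hl).
- by case: (h2 _ _ _ _ huw' d1 hl').
- by rewrite (h3 _ _ _ d1 d1' hl hl') eqxx in nuu'.
Qed.

Lemma LE_LD_disj u i x y : dg u != 3%N -> atv u (LE i) -> atv u (LD x y) ->
  i != x /\ i != y.
Proof.
move=> hu hi hxy; have [w [huw hl hw]] := at_LD hu hxy.
have [_ hx hy _] := d3_LD_idx hw (adjC huw) (etrans (esym (labC huw)) hl).
have nuw : u != w by apply: contraNneq hu => ->; rewrite hw.
split; apply/eqP => E; subst i.
- by have [_ hl'] := uniqLE hi hx nuw; rewrite hl in hl'.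
- by have [_ hl'] := uniqLE hi hy nuw; rewrite hl in hl'.
Qed.

Lemma LD_uniq u x y x' y' : dg u != 3%N -> atv u (LD x y) -> atv u (LD x' y') ->
  x = x' /\ y = y'.
Proof.
move=> hu h h'; have [w [huw hl hw]] := at_LD hu h.
have [w' [huw' hl' hw']] := at_LD hu h'.
have ew := far2 hw hw' huw huw'; subst w'.
by apply: LD_inj; rewrite -hl -hl'.
Qed.

Lemma supp u (p : 'I_m -> K) i : onL adj lab loopl u p -> (p i != 0)%R ->
  atv u (LE i) \/ (dg u != 3%N /\ exists w x y,
     [/\ adj u w, dg w = 3%N, lab u w = LD x y & atv w (LE i)]).
Proof.
rewrite /onL; case: eqP => hu.
  move=> h pi0; case: (classic (atv u (LE i))) => [|n]; first by left.
  by rewrite (h i n) eqxx in pi0.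
move=> [h _] pi0.
case: (classic (exists l, atv u l /\ appears i l)) => [[l [hl ha]]|n]; last first.
  by rewrite (h i n) eqxx in pi0.
case: ha => [e|[j [e|e]]]; subst l; first by left.
all: right; split; first by apply/eqP.
all: have [w [huw hl' hw]] := at_LD (introN eqP hu) hl.
all: have [_ hx hy _] := d3_LD_idx hw (adjC huw) (etrans (esym (labC huw)) hl').
all: by exists w; eexists; eexists; split; eauto.
Qed.


Lemma combC u v (p : 'I_m -> K) i0 q :
  u != v -> onL adj lab loopl u p -> (p i0 != 0)%R -> (p q != 0)%R ->
  atv v (LE i0) ->
  ((atv v (LE q) /\ i0 != q) \/
   (dg v != 3%N /\ exists z y, [/\ adj v z, dg z = 3%N, lab v z = LD q y & atv z (LE q)])) ->
  [/\ dg v = 3%N, adj u v, dg u != 3%N & exists x y, lab u v = LD x y].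
Proof.
move=> nuv hp pi0 pq hv0 hty.
have S0 := supp hp pi0; have S1 := supp hp pq.
case: hty => [[hvq niq]|[hv3 [z [y [hvz hz3 hlz hzq]]]]].
- case: S0 => [A0|[hu3 [w0 [x0 [y0 [huw0 hw03 hl0 hw0i]]]]]];
  case: S1 => [A1|[hu3' [w1 [x1 [y1 [huw1 hw13 hl1 hw1q]]]]]].
  + have [_ l0] := uniqLE A0 hv0 nuv; have [_ l1] := uniqLE A1 hvq nuv.
    by rewrite l0 in l1; rewrite (LE_inj l1) eqxx in niq.
  + have [a0 l0] := uniqLE A0 hv0 nuv.
    have [ew|nw] := eqVneq w1 v; first by subst; rewrite l0 in hl1.
    have [a1 _] := uniqLE hw1q hvq nw.
    by case: (notri a0 (adjC a1) (adjC huw1)).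
  + have [a1 l1] := uniqLE A1 hvq nuv.
    have [ew|nw] := eqVneq w0 v; first by subst; rewrite l1 in hl0.
    have [a0 _] := uniqLE hw0i hv0 nw.
    by case: (notri a1 (adjC a0) (adjC huw0)).
  + have ew := far2 hw03 hw13 huw0 huw1; subst w1.
    have [ew|nw] := eqVneq w0 v.
      by subst; split => //; exists x0, y0.
    have [_ l0] := uniqLE hw0i hv0 nw; have [_ l1] := uniqLE hw1q hvq nw.
    by rewrite l0 in l1; rewrite (LE_inj l1) eqxx in niq.
- have nvz : v != z by apply: contraNneq hv3 => ->; rewrite hz3.
  have hi0 : (atv u (LE i0) -> adj u v /\ lab u v = LE i0) /\
    (forall w0, adj u w0 -> dg w0 = 3%N -> atv w0 (LE i0) -> adj w0 v /\ lab w0 v = LE i0).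
    split; first by move=> h; apply: uniqLE h hv0 nuv.
    move=> w0 _ hw03 h; apply: uniqLE h hv0 _.
    by apply: contraNneq hv3 => <-; rewrite hw03.
  case: S1 => [A1|[hu3 [w1 [x1 [y1 [huw1 hw13 hl1 hw1q]]]]]].
  + have [ez|nz] := eqVneq u z.
      subst u; case: S0 => [A0|[hu3 _]]; last by rewrite hz3 in hu3.
      have [a l] := proj1 hi0 A0; by rewrite (labC hvz) l in hlz.
    have [auz luz] := uniqLE A1 hzq nz.
    case: S0 => [A0|[hu3 [w0 [x0 [y0 [huw0 hw03 hl0 hw0i]]]]]].
      have [a _] := proj1 hi0 A0; by case: (notri a hvz (adjC auz)).
    have ew := far2 hz3 hw03 auz huw0; subst w0.
    have [_ l] := proj2 hi0 z auz hz3 hw0i; by rewrite (labC hvz) l in hlz.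
  + have [ew|nw] := eqVneq w1 z; last first.
      have [a _] := uniqLE hw1q hzq nw; by move: (far_adj hw13 hz3); rewrite a.
    subst w1.
    case: S0 => [A0|[hu3' [w0 [x0 [y0 [huw0 hw03 hl0 hw0i]]]]]].
      have [a _] := proj1 hi0 A0; by case: (notri a hvz (adjC huw1)).
    have ew := far2 hz3 hw03 huw1 huw0; subst w0.
    have [_ l] := proj2 hi0 z huw1 hz3 hw0i; by rewrite (labC hvz) l in hlz.
Qed.

Definition ee (i : 'I_m) : 'I_m -> K := fun j => (j == i)%:R.

Lemma ptE i0 (be : 'I_m -> K) a b x : pt i0 be a b x = a * (x == i0)%:R + b * be x.
Proof. by []. Qed.

Lemma appLE (x i : 'I_m) : appears x (LE i) <-> x = i.
Proof.
split => [[e|[j [e|e]]]|->]; first by case: e.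
- by []. - by []. - by left.
Qed.

Lemma appLD (x i j : 'I_m) : appears x (LD i j) <-> x = i \/ x = j.
Proof.
split => [[e|[j' [e|e]]]|[->|->]].
- by [].
- by case: e => -> _; left.
- by case: e => _ ->; right.
- by right; exists j; left.
- by right; exists i; right.
Qed.

Ltac simpr := rewrite ?eqxx /= ?mulr0n ?mulr1n ?mulr1 ?mulr0 ?mul0r ?mul1r ?addr0 ?add0r ?mulr1 ?mulr0 ?mul0r ?mul1r ?addr0 ?add0r ?mulr1 ?mulr0 ?mul0r ?mul1r ?addr0 ?add0r.

Lemma onL_d3 u j k (p : 'I_m -> K) : dg u = 3%N ->
  (forall i, atv u (LE i) <-> i = j \/ i = k) -> j != k ->
  onl u p <-> forall x, p x = pt j (ee k) (p j) (p k) x.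
Proof.
move=> hu hat njk; have nkj : k != j by rewrite eq_sym.
rewrite /onL hu eqxx; split => h x.
- rewrite ptE /ee; have [->|nxj] := eqVneq x j.
    by rewrite ?(negbTE njk); simpr.
  have [->|nxk] := eqVneq x k; first by rewrite ?(negbTE nkj); simpr.
  simpr; apply: h.
  by move/hat => [] /eqP; rewrite ?(negbTE nxj) ?(negbTE nxk).
- move=> nat; rewrite h ptE /ee.
  have nxj : x != j by apply/eqP => e; apply: nat; apply/hat; left.
  have nxk : x != k by apply/eqP => e; apply: nat; apply/hat; right.
  by rewrite ?(negbTE nxj) ?(negbTE nxk); simpr.
Qed.

Lemma onL_c u i i' (p : 'I_m -> K) : dg u != 3%N ->
  (forall l, atv u l <-> l = LE i \/ l = LE i') -> i != i' ->
  onl u p <-> forall x, p x = pt i (ee i') (p i) (p i') x.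
Proof.
move=> hu hat nii; have ni'i : i' != i by rewrite eq_sym.
rewrite /onL (negbTE hu); split.
- move=> [h _] x; rewrite ptE /ee; have [->|nxi] := eqVneq x i.
    by rewrite ?(negbTE nii); simpr.
  have [->|nxi'] := eqVneq x i'; first by rewrite ?(negbTE ni'i); simpr.
  simpr; apply: h.
  move=> [l [/hat [] -> /appLE e]]; by [rewrite e eqxx in nxi | rewrite e eqxx in nxi'].
- move=> h; split.
    move=> x nat; rewrite h ptE /ee.
    have nxi : x != i by apply/eqP => e; apply: nat; exists (LE i); split; [apply/hat; left|apply/appLE].
    have nxi' : x != i' by apply/eqP => e; apply: nat; exists (LE i'); split; [apply/hat; right|apply/appLE].
    by rewrite (negbTE nxi) (negbTE nxi'); simpr.
  by move=> j k /hat [].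
Qed.

Lemma onL_ld u i x y (p : 'I_m -> K) : dg u != 3%N ->
  (forall l, atv u l <-> l = LE i \/ l = LD x y) -> x != y -> i != x -> i != y ->
  onl u p <-> forall z, p z = pt i (fun z => ee x z + ee y z) (p i) (p x) z.
Proof.
move=> hu hat nxy nix niy.
have nyx : y != x by rewrite eq_sym.
have nxi : x != i by rewrite eq_sym.
have nyi : y != i by rewrite eq_sym.
rewrite /onL (negbTE hu); split.
- move=> [h hd] z; rewrite ptE /ee.
  have hxy : p x = p y by apply: hd; apply/hat; right.
  have [->|nzi] := eqVneq z i.
    by rewrite ?(negbTE nix) ?(negbTE niy); simpr.
  have [->|nzx] := eqVneq z x.
    by rewrite ?(negbTE nxy); simpr.
  have [->|nzy] := eqVneq z y.
    by rewrite ?(negbTE nyx); simpr.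
  simpr; apply: h.
  move=> [l [/hat [] -> ]].
    by move/appLE => e; rewrite e eqxx in nzi.
  by move/appLD => [] e; [rewrite e eqxx in nzx | rewrite e eqxx in nzy].
- move=> h; split.
    move=> z nat; rewrite h ptE /ee.
    have nzi : z != i by apply/eqP => e; apply: nat; exists (LE i); split; [apply/hat; left|apply/appLE].
    have nzx : z != x by apply/eqP => e; apply: nat; exists (LD x y); split; [apply/hat; right|apply/appLD; left].
    have nzy : z != y by apply/eqP => e; apply: nat; exists (LD x y); split; [apply/hat; right|apply/appLD; right].
    by rewrite (negbTE nzi) (negbTE nzx) (negbTE nzy); simpr.
  move=> j k /hat [] // [-> ->].
  rewrite [LHS]h [RHS]h !ptE /ee (negbTE nxi) (negbTE nyi) (negbTE nxy) (negbTE nyx).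
  by simpr.
Qed.


Definition good u i0 q (be : 'I_m -> K) : Prop :=
  [/\ i0 != q, be i0 = 0 /\ be q = 1, atv u (LE i0),
   (atv u (LE q) /\ (forall j, be j = ee q j) /\
      (dg u != 3%N -> forall l, atv u l -> l = LE i0 \/ l = LE q))
   \/ (exists z y, [/\ dg u != 3%N, adj u z, dg z = 3%N, lab u z = LD q y &
          [/\ q != y, i0 != y & forall j, be j = ee q j + ee y j]])
 & forall p, onl u p <-> forall j, p j = pt i0 be (p i0) (p q) j].

Lemma ee_eq i : ee i i = 1. Proof. by rewrite /ee eqxx. Qed.
Lemma ee_neq i j : j != i -> ee i j = 0. Proof. by rewrite /ee => /negbTE ->. Qed.

Lemma mk_good_c u i i' : dg u != 3%N ->
  (forall l, atv u l <-> l = LE i \/ l = LE i') -> i != i' -> good u i i' (ee i').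
Proof.
move=> hu hat nii; split => //.
- by rewrite ee_neq // ee_eq.
- by apply/hat; left.
- by left; split; [apply/hat; right | split => // _ l /hat].
- by move=> p; apply: onL_c.
Qed.

Lemma mk_good_ld u i x y z : dg u != 3%N ->
  (forall l, atv u l <-> l = LE i \/ l = LD x y) -> adj u z -> dg z = 3%N ->
  lab u z = LD x y -> x != y -> i != x -> i != y ->
  good u i x (fun j => ee x j + ee y j).
Proof.
move=> hu hat huz hz hl nxy nix niy; split => //.
- split; first by rewrite !ee_neq ?addr0 // eq_sym.
  by rewrite ee_eq ee_neq ?addr0 // eq_sym.
- by apply/hat; left.
- by right; exists z, y; split.
- by move=> p; apply: onL_ld.
Qed.

Lemma good_ex u : dg u != 0%N -> exists i0 q be, good u i0 q be.
Proof.
move=> hu0; have hle := proj1 hdeg u.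
have [h3|n3] := eqVneq (dg u) 3%N.
  case: hadm => _ H3 _ _.
  have [j [k [njk [a [b [c [hn ha hb hc]]]]]]] := H3 u h3.
  have huc : adj u c by rewrite -in_nbhd hn !inE eqxx !orbT.
  have hua : adj u a by rewrite -in_nbhd hn !inE eqxx.
  have hub : adj u b by rewrite -in_nbhd hn !inE eqxx orbT.
  have hat : forall i, atv u (LE i) <-> i = j \/ i = k.
    move=> i; split.
      case: hc => hc.
        by have [_ _ _ H] := d3_LD_idx h3 huc hc; apply: H.
      by have [_ _ _ H] := d3_LD_idx h3 huc hc => /H [] ->; auto.
    by case=> ->; left; [exists a | exists b].
  exists j, k, (ee k); split => //.
  - by rewrite ee_neq // ee_eq.
  - by apply/hat; left.
  - left; split; first by apply/hat; right.
    by split => //; rewrite h3.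
  - by move=> p; apply: onL_d3.
have n0 : (0 < dg u)%N by rewrite lt0n.
have : (dg u == 1%N) || (dg u == 2%N).
  by move: hle n0 n3; case: (dg u) => [|[|[|[|]]]].
case/orP => /eqP hd.
- have /cards1P [w hw] : #|nbhd adj u| == 1%N by rewrite -/(deg adj u) hd.
  have huw : adj u w by rewrite -in_nbhd hw inE.
  have [l0 hl0] := loop_LE hd.
  have hat : forall l, atv u l <-> l = lab u w \/ l = LE l0.
    move=> l; split.
      case=> [[w' [hw' <-]]|[_ <-]]; last by right.
      by left; move: hw'; rewrite -in_nbhd hw inE => /eqP ->.
    by case=> ->; [left; exists w | right; split].
  have n3' : dg u != 3%N by rewrite hd.
  case el: (lab u w) => [i|x y].
  + have nil : l0 != i.
      apply/eqP => E; subst; case: hadm => _ _ _ [_ H2 _].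
      by apply: (H2 _ _ _ _ huw hd el).
    exists l0, i, (ee i); apply: mk_good_c => // l; rewrite hat el; tauto.
  + have hw3 := LD_edge huw el n3'.
    have [nxy _ _ _] := d3_LD_idx hw3 (adjC huw) (etrans (esym (labC huw)) el).
    have [nx ny] : l0 != x /\ l0 != y.
      by apply: LE_LD_disj n3' _ _; apply/hat; [right | left].
    exists l0, x, (fun j => ee x j + ee y j).
    by apply: (mk_good_ld n3' _ huw hw3 el) => // l; rewrite hat el; tauto.
- have /cards2P [w1 [w2 [nw hw]]] : #|nbhd adj u| == 2%N by rewrite -/(deg adj u) hd.
  have huw1 : adj u w1 by rewrite -in_nbhd hw !inE eqxx.
  have huw2 : adj u w2 by rewrite -in_nbhd hw !inE eqxx orbT.
  have n3' : dg u != 3%N by rewrite hd.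
  have hat : forall l, atv u l <-> l = lab u w1 \/ l = lab u w2.
    move=> l; split.
      case=> [[w' [hw' <-]]|[h1 _]]; last by rewrite hd in h1.
      by move: hw'; rewrite -in_nbhd hw !inE => /orP [] /eqP ->; auto.
    by case=> ->; left; [exists w1 | exists w2].
  suff G2 : forall w1 w2, w1 != w2 -> adj u w1 -> adj u w2 ->
      (forall l, atv u l <-> l = lab u w1 \/ l = lab u w2) ->
      (exists i, lab u w2 = LE i) -> exists i0 q be, good u i0 q be.
    case e2: (lab u w2) => [i|x y].
      by apply: (G2 w1 w2) => //; exists i.
    case e1: (lab u w1) => [i|x' y'].
      apply: (G2 w2 w1) => //; first by rewrite eq_sym.
        by move=> l; rewrite hat; tauto.
      by exists i.
    have h1 := LD_edge huw1 e1 n3'; have h2 := LD_edge huw2 e2 n3'.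
    by have := far2 h1 h2 huw1 huw2 => e; rewrite e eqxx in nw.
  move=> v1 v2 nv hv1 hv2 hat' [i ei].
  case e1: (lab u v1) => [i'|x y].
  + have nii : i != i'.
      apply/eqP => E; subst; case: hadm => _ _ _ [H1 _ _].
      have E := H1 _ _ _ _ _ hv1 hv2 e1 ei.
      have : v1 \in [set u; v2] by rewrite -E !inE eqxx orbT.
      rewrite !inE (negbTE nv) orbF => /eqP e.
      by move: hv1; rewrite -e (negbTE (adj_irr _)).
    exists i, i', (ee i'); apply: mk_good_c => // l; rewrite hat' e1 ei; tauto.
  + have hw3 := LD_edge hv1 e1 n3'.
    have [nxy _ _ _] := d3_LD_idx hw3 (adjC hv1) (etrans (esym (labC hv1)) e1).
    have [nx ny] : i != x /\ i != y.
      by apply: LE_LD_disj n3' _ _; apply/hat'; [right | left].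
    exists i, x, (fun j => ee x j + ee y j).
    by apply: (mk_good_ld n3' _ hv1 hw3 e1) => // l; rewrite hat' e1 ei; tauto.
Qed.

Lemma deg0_triv u p : dg u = 0%N -> onl u p -> forall j, p j = 0.
Proof.
move=> hu; rewrite /onL hu /= => [[h _]] j; apply: h => [[l [hl _]]].
case: hl => [[w [huw _]]|[h1 _]]; last by rewrite hu in h1.
have : w \in nbhd adj u by rewrite in_nbhd.
by move: hu; rewrite /deg => /eqP; rewrite cards_eq0 => /eqP ->; rewrite inE.
Qed.

Hypothesis hK : [pchar K] =i pred0.
Variables (F : 'I_m -> {mpoly K[m]}) (e : 'I_m -> nat) (k : nat).
Hypothesis hgs : global_section adj lab loopl k F e.
Variable idef : 'I_m.

Lemma hom i : F i \is (k + e i)%N.-homog.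
Proof. by case: hgs. Qed.

Lemma ptI0 i0 (be : 'I_m -> K) a b : be i0 = 0 -> pt i0 be a b i0 = a.
Proof. by move=> h; rewrite ptE h eqxx mulr1 mulr0 addr0. Qed.

Lemma ptQ i0 q (be : 'I_m -> K) a b : i0 != q -> be q = 1 -> pt i0 be a b q = b.
Proof. by move=> h h1; rewrite ptE h1 eq_sym (negbTE h) mulr0 add0r mulr1. Qed.

Lemma compat_gen u p i j : onl u p -> p i != 0 -> p j != 0 ->
  (F i).@[p] * p j ^+ e j = (F j).@[p] * p i ^+ e i.
Proof.
move=> hp pi pj; case: hgs => _ /(_ i j) [N hN].
have := hN u p hp; rewrite rmorphM rmorphXn rmorphB !rmorphM !rmorphXn /= !mevalXU.
move/eqP; rewrite mulf_eq0 expf_eq0 mulf_eq0 (negbTE pi) (negbTE pj) andbF /=.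
by rewrite subr_eq0 => /eqP.
Qed.

Lemma compat_plane u i0 q be : good u i0 q be -> forall a b i j,
  pt i0 be a b i != 0 -> pt i0 be a b j != 0 ->
  (F i).@[pt i0 be a b] * (pt i0 be a b j) ^+ e j =
  (F j).@[pt i0 be a b] * (pt i0 be a b i) ^+ e i.
Proof.
move=> [niq [hb0 hb1] _ _ hon] a b i j pi pj; apply: compat_gen pi pj.
by apply: (proj2 (hon _)) => x; rewrite (ptI0 a b hb0) (ptQ a b niq hb1).
Qed.

Definition Qd u (d : 'I_m * 'I_m * ('I_m -> K) * {poly K}) : Prop :=
  let: (i0, q, be, P) := d in
  (dg u = 0%N /\ P = 0) \/
  (good u i0 q be /\ (size P <= k.+1)%N /\
    forall a b i, pt i0 be a b i != 0 ->
      Tf k P a b * (pt i0 be a b i) ^+ e i = (F i).@[pt i0 be a b]).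

Lemma Qd_ex u : exists d, Qd u d.
Proof.
have [h0|n0] := eqVneq (dg u) 0%N.
  by exists (idef, idef, (fun _ => 0), 0); left.
have [i0 [q [be hg]]] := good_ex n0.
have [niq [hb0 hb1] _ _ _] := hg.
have [P [hP hl]] := local_lemma hK hom niq hb0 hb1 (compat_plane hg).
by exists (i0, q, be, P); right.
Qed.

Definition Dd u := proj1_sig (constructive_indefinite_description _ (Qd_ex u)).
Lemma DdP u : Qd u (Dd u).
Proof. exact: (proj2_sig (constructive_indefinite_description _ (Qd_ex u))). Qed.
Definition I0 u := (Dd u).1.1.1.
Definition Q0 u := (Dd u).1.1.2.
Definition B0 u := (Dd u).1.2.
Definition P0 u := (Dd u).2.

Lemma DdP' u : (dg u = 0%N /\ P0 u = 0) \/
  (good u (I0 u) (Q0 u) (B0 u) /\ (size (P0 u) <= k.+1)%N /\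
    forall a b i, pt (I0 u) (B0 u) a b i != 0 ->
      Tf k (P0 u) a b * (pt (I0 u) (B0 u) a b i) ^+ e i = (F i).@[pt (I0 u) (B0 u) a b]).
Proof. by have := DdP u; rewrite /I0 /Q0 /B0 /P0; case: (Dd u) => [[[i0 q] be] P]. Qed.

Lemma Dd_good u : dg u != 0%N -> good u (I0 u) (Q0 u) (B0 u) /\
    forall a b i, pt (I0 u) (B0 u) a b i != 0 ->
      Tf k (P0 u) a b * (pt (I0 u) (B0 u) a b i) ^+ e i = (F i).@[pt (I0 u) (B0 u) a b].
Proof. by move=> n0; case: (DdP' u) => [[h _]|[? [_ ?]]]; [rewrite h in n0|]. Qed.

Definition mix (P : {poly K}) a b :=
  \sum_(c < k.+1 | (0 < c < k)%N) P`_c * a ^+ c * b ^+ (k - c).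

Lemma Tf_split (P : {poly K}) a b : (0 < k)%N -> Tf k P a b = P`_k * a ^+ k + P`_0 * b ^+ k + mix P a b.
Proof.
move=> k0; rewrite /Tf (bigD1 ord_max) //= (bigD1 ord0) /=; last by rewrite -val_eqE /= eq_sym -lt0n.
rewrite subnn expr0 mulr1 subn0 expr0 mulr1 addrA; congr (_ + _).
apply: eq_bigl => c; rewrite -!val_eqE /= lt0n andbC; congr (_ && _).
by rewrite ltn_neqAle -ltnS ltn_ord andbT.
Qed.

Lemma mix0l (P : {poly K}) b : mix P 0 b = 0.
Proof.
rewrite /mix big1 // => c /andP [c0 _].
by rewrite expr0n (negbTE (lt0n_neq0 c0)) mulr0 mul0r.
Qed.

Lemma mix0r (P : {poly K}) a : mix P a 0 = 0.
Proof.
rewrite /mix big1 // => c /andP [_ ck].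
by rewrite expr0n subn_eq0 leqNgt ck mulr0.
Qed.

Lemma mix_bb (P : {poly K}) b : mix P b b = b ^+ k * mix P 1 1.
Proof.
rewrite /mix mulr_sumr; apply: eq_bigr => c /andP [_ ck].
by rewrite !expr1n !mulr1 -mulrA -exprD subnKC ?(ltnW ck) // mulrC.
Qed.

Lemma Tf01 (P : {poly K}) : Tf k P 0 1 = P`_0.
Proof.
rewrite /Tf big_ord_recl /= expr0 expr1n !mulr1 big1 ?addr0 // => c _.
by rewrite /bump /= expr0n /= mulr0 mul0r.
Qed.

Lemma Tf10 (P : {poly K}) : (0 < k)%N -> Tf k P 1 0 = P`_k.
Proof. by move=> k0; rewrite Tf_split // mix0r expr1n mulr1 expr0n (negbTE (lt0n_neq0 k0)) mulr0 !addr0. Qed.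

Lemma Tf11 (P : {poly K}) : (0 < k)%N -> Tf k P 1 1 = P`_k + P`_0 + mix P 1 1.
Proof. by move=> k0; rewrite Tf_split // !expr1n !mulr1. Qed.

Lemma Pz u : dg u != 0%N -> (P0 u)`_0 = (F (Q0 u)).@[B0 u].
Proof.
move=> n0; have [[niq [hb0 hb1] _ _ _] hl] := Dd_good n0.
have := hl 0 1 (Q0 u); rewrite ptQ // oner_neq0 expr1n mulr1 Tf01 => -> //.
by apply: meval_eq => j; rewrite ptE mul0r add0r mul1r.
Qed.

Lemma Pk u : (0 < k)%N -> dg u != 0%N -> (P0 u)`_k = (F (I0 u)).@[ee (I0 u)].
Proof.
move=> k0 n0; have [[niq [hb0 hb1] _ _ _] hl] := Dd_good n0.
have := hl 1 0 (I0 u); rewrite ptI0 // oner_neq0 expr1n mulr1 Tf10 // => -> //.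
by apply: meval_eq => j; rewrite ptE mul0r addr0 mul1r.
Qed.

Definition Hp : {mpoly K[m]} :=
  \sum_(i < m) (F i).@[ee i] *: 'X_i ^+ k +
  \sum_(v : V) \sum_(c < k.+1 | (0 < c < k)%N)
      (P0 v)`_c *: ('X_(I0 v) ^+ c * 'X_(Q0 v) ^+ (k - c)).

Lemma Hp_hom : Hp \is k.-homog.
Proof.
have hX i : ('X_i : {mpoly K[m]}) \is 1.-homog by rewrite dhomogX /= mdeg1.
rewrite rpredD //.
  apply: rpred_sum => i _.
  by apply: dhomogZ; have := dhomogMn k (hX i); rewrite mul1n.
apply: rpred_sum => v _; apply: rpred_sum => c /andP [_ ck]; apply: dhomogZ.
have := dhomogM (dhomogMn c (hX (I0 v))) (dhomogMn (k - c) (hX (Q0 v))).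
by rewrite !mul1n subnKC // ltnW.
Qed.

Lemma Hp_eval p : Hp.@[p] = \sum_(i < m) (F i).@[ee i] * p i ^+ k +
  \sum_(v : V) mix (P0 v) (p (I0 v)) (p (Q0 v)).
Proof.
rewrite rmorphD !rmorph_sum /=; congr (_ + _).
  by apply: eq_bigr => i _; rewrite mevalZ rmorphXn /= mevalXU.
apply: eq_bigr => v _; rewrite rmorph_sum /=; apply: eq_bigr => c _.
by rewrite mevalZ rmorphM !rmorphXn /= !mevalXU mulrA.
Qed.

Lemma eqF_sym (x y : 'I_m) : x != y -> (y == x) = false.
Proof. by rewrite eq_sym => /negbTE. Qed.

Lemma mixv_zero u v p : u != v -> onl u p ->
  mix (P0 v) (p (I0 v)) (p (Q0 v)) = 0 \/
  [/\ dg v = 3%N, adj u v, dg u != 3%N & exists x y, lab u v = LD x y].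
Proof.
move=> nuv hp; case: (DdP' v) => [[_ ->]|[[niq _ hat0 hty _] _]].
  by left; rewrite /mix big1 // => c _; rewrite coef0 !mul0r.
have [a0|a0] := eqVneq (p (I0 v)) 0; first by left; rewrite a0 mix0l.
have [b0|b0] := eqVneq (p (Q0 v)) 0; first by left; rewrite b0 mix0r.
right; apply: (combC nuv hp a0 b0 hat0).
case: hty => [[hq _]|[z [y [hv3 hvz hz3 hl _]]]]; first by left.
right; split => //; exists z, y; split => //.
by have [_ hq _ _] := d3_LD_idx hz3 (adjC hvz) (etrans (esym (labC hvz)) hl).
Qed.

Lemma Hp_on u p : (0 < k)%N -> dg u != 0%N -> onl u p ->
  Hp.@[p] = Tf k (P0 u) (p (I0 u)) (p (Q0 u)).
Proof.
move=> k0 n0 hpon.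
have PK := Pk k0 n0; have PZ := Pz n0.
have [hg hl] := Dd_good n0.
have [niq [hb0 hb1] hat0 hty hon] := hg.
have hp := proj1 (hon p) hpon.
set i0 := I0 u in niq hb0 hat0 hty hon hp PK hl *.
set q := Q0 u in niq hb1 hty hon hp PZ hl *.
set be := B0 u in hb0 hb1 hty hon hp PZ hl *.
set a := p i0 in hp *; set b := p q in hp *.
have e0k : (0 : K) ^+ k = 0 by rewrite expr0n (negbTE (lt0n_neq0 k0)).
rewrite Hp_eval (bigD1 u) //= Tf_split // PK PZ.
case: hty => [[hq [hbe hlist]]|[z [y [hu3 huz hz3 hlz [nqy niy hbe]]]]].
- rewrite [X in _ + (_ + X)]big1 ?addr0; last first.
    move=> v nv; case: (mixv_zero (u:=u) (v:=v) _ hpon) => //; first by rewrite eq_sym.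
    move=> [_ huv hu3 [x [y hxy]]].
    by case: (hlist hu3 (LD x y)) => //; left; exists v.
  rewrite (bigD1 i0) //= (bigD1 q) /=; last by rewrite eq_sym niq.
  rewrite big1 ?addr0; last first.
    move=> j /andP [nj0 njq]; rewrite hp ptE hbe /ee (negbTE nj0) (negbTE njq).
    by rewrite !mulr0 addr0 e0k mulr0.
  have -> : (F q).@[be] = (F q).@[ee q] by apply: meval_eq => j; rewrite hbe.
  by [].
- have nzu : z != u by apply: contraNneq hu3 => <-; rewrite hz3.
  have z0 : dg z != 0%N by rewrite hz3.
  have [[nizq [hbz0 hbz1] hatz htyz honz] hlz'] := Dd_good z0.
  have [hqz hbez] : atv z (LE (Q0 z)) /\ forall j, B0 z j = ee (Q0 z) j.
    by case: htyz => [[? [? _]]|[? [? [h3' _]]]]; [|rewrite hz3 in h3'].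
  have [nqy' hzq hzy hzall] := d3_LD_idx hz3 (adjC huz) (etrans (esym (labC huz)) hlz).
  have py : p y = b.
    rewrite hp ptE hbe /ee eqxx (eqF_sym nqy) (eqF_sym niy).
    by rewrite mulr0 add0r add0r mulr1.
  have pqz : p (Q0 z) = b by case: (hzall _ hqz) => ->.
  have piz : p (I0 z) = b by case: (hzall _ hatz) => ->.
  rewrite (bigD1 z) //= piz pqz mix_bb.
  rewrite [X in _ + (_ + (_ + X))]big1 ?addr0; last first.
    move=> v /andP [nvu nvz]; case: (mixv_zero (u:=u) (v:=v) _ hpon) => //.
      by rewrite eq_sym.
    move=> [hv3 huv _ _]; have := far2 hz3 hv3 huz huv => evz.
    by rewrite evz eqxx in nvz.
  rewrite (bigD1 i0) //= (bigD1 q) /=; last by rewrite eq_sym niq.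
  rewrite (bigD1 y) /=; last by rewrite eq_sym niy eq_sym nqy.
  rewrite big1 ?addr0; last first.
    move=> j /andP [/andP [nj0 njq] njy]; rewrite hp ptE hbe /ee (negbTE nj0) (negbTE njq).
    by rewrite (negbTE njy) /= ?mulr0n !mulr0 ?addr0 ?add0r ?mulr0 e0k mulr0.
  rewrite py.
  have T11 := Tf11 (P0 z) k0.
  rewrite (Pk k0 z0) (Pz z0) in T11.
  have eFz : (F (Q0 z)).@[B0 z] = (F (Q0 z)).@[ee (Q0 z)] by apply: meval_eq => j; rewrite hbez.
  rewrite eFz in T11.
  have hz11 := hlz' 1 1 (I0 z); rewrite ptI0 // oner_neq0 expr1n mulr1 in hz11.
  have hz11' := hz11 isT.
  have ptz : forall j, pt (I0 z) (B0 z) 1 1 j = be j.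
    move=> j; rewrite ptE hbez hbe !mul1r.
    case: (hzall _ hatz) => e1; case: (hzall _ hqz) => e2; rewrite /ee e1 e2 //.
    - by rewrite e1 e2 eqxx in nizq.
    - by rewrite addrC.
    - by rewrite e1 e2 eqxx in nizq.
  have hFz : (F (I0 z)).@[pt (I0 z) (B0 z) 1 1] = (F q).@[be].
    rewrite (meval_eq _ ptz); case: (hzall _ hatz) => ->; first by [].
    have hu01 := hl 0 1; rewrite /=.
    have p01 : forall j, pt i0 be 0 1 j = be j by move=> j; rewrite ptE mul0r add0r mul1r.
    have h1 := hu01 q; rewrite ptQ // oner_neq0 expr1n mulr1 (meval_eq _ p01) in h1.
    have h2 := hu01 y; rewrite p01 hbe /ee eqxx (eqF_sym nqy) add0r oner_neq0 expr1n mulr1 (meval_eq _ p01) in h2.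
    by rewrite -h2 // -h1.
  have hsum : (F (I0 z)).@[ee (I0 z)] + (F (Q0 z)).@[ee (Q0 z)] =
      (F q).@[ee q] + (F y).@[ee y].
    case: (hzall _ hatz) => e1; case: (hzall _ hqz) => e2; rewrite e1 e2 //.
    - by rewrite e1 e2 eqxx in nizq.
    - by rewrite addrC.
    - by rewrite e1 e2 eqxx in nizq.
  rewrite -hFz -hz11' T11 hsum.
  set A := (F i0).@[ee i0]; set Bq := (F q).@[ee q]; set By := (F y).@[ee y].
  set M1 := mix (P0 u) a b; set M2 := mix (P0 z) 1 1.
  ring.
Qed.

Lemma Tf_val v p i : dg v != 0%N -> onl v p -> p i != 0 ->
  Tf k (P0 v) (p (I0 v)) (p (Q0 v)) * p i ^+ e i = (F i).@[p].
Proof.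
move=> n0 hp pi0; have [[niq [hb0 hb1] _ _ hon] hl] := Dd_good n0.
have hp' := proj1 (hon p) hp.
have pi' : pt (I0 v) (B0 v) (p (I0 v)) (p (Q0 v)) i != 0 by rewrite -hp'.
by rewrite (meval_eq _ hp') [X in X ^+ e i](hp' i) hl.
Qed.

Lemma final_pos : (0 < k)%N -> exists H : {mpoly K[m]}, H \is k.-homog /\
  forall i, exists N : nat, inIC adj lab loopl ('X_i ^+ N * (H * 'X_i ^+ e i - F i)).
Proof.
move=> k0; exists Hp; split; first exact: Hp_hom.
move=> i; exists 1%N => v p hp.
rewrite rmorphM rmorphXn rmorphB rmorphM rmorphXn /= !mevalXU expr1.
have [->|pi0] := eqVneq (p i) 0; first by rewrite mul0r.
have n0 : dg v != 0%N.
  by apply: contraNneq pi0 => h; rewrite (deg0_triv h hp).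
by rewrite (Hp_on k0 n0 hp) (Tf_val n0 hp pi0) subrr mulr0.
Qed.

Lemma deg_pos u w : adj u w -> dg u != 0%N.
Proof.
move=> huw; apply/eqP => h; have : w \in nbhd adj u by rewrite in_nbhd.
by move: h; rewrite /deg => /eqP; rewrite cards_eq0 => /eqP ->; rewrite inE.
Qed.

Lemma pointLE u i : atv u (LE i) -> onl u (ee i).
Proof.
move=> hi; rewrite /onL; case: eqP => hu.
  move=> j nj; rewrite ee_neq //; apply/eqP => E; subst j; exact: nj.
split.
  move=> x nx; rewrite ee_neq //; apply/eqP => E; subst x; apply: nx.
  by exists (LE i); split => //; left.
move=> j k' hjk; have [nj nk] := LE_LD_disj (introN eqP hu) hi hjk.
by rewrite !ee_neq // eq_sym.
Qed.

Lemma LD_neq u w x y : adj u w -> lab u w = LD x y -> x != y.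
Proof.
move=> huw hl; have [h3|n3] := eqVneq (dg u) 3%N.
  by have [] := d3_LD_idx h3 huw hl.
have hw := LD_edge huw hl n3.
by have [] := d3_LD_idx hw (adjC huw) (etrans (esym (labC huw)) hl).
Qed.

Lemma pointLD u w x y : adj u w -> lab u w = LD x y -> onl u (fun j => ee x j + ee y j).
Proof.
move=> huw hl; have nxy := LD_neq huw hl; rewrite /onL; case: eqP => hu.
  have [_ hx hy _] := d3_LD_idx hu huw hl.
  move=> j nj; rewrite !ee_neq ?addr0 //; apply/eqP => E; subst j; exact: nj.
have hat : atv u (LD x y) by left; exists w.
split.
  move=> z nz; rewrite !ee_neq ?addr0 //; apply/eqP => E; subst z; apply: nz;
    exists (LD x y); split => //; apply/appLD; auto.
move=> j k' hjk; have [<- <-] := LD_uniq (introN eqP hu) hat hjk.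
by rewrite !ee_eq (ee_neq (i:=y)) ?(ee_neq (i:=x)) ?addr0 ?add0r // eq_sym.
Qed.

Lemma Tf0 (P : {poly K}) a b : k = 0%N -> Tf k P a b = P`_0.
Proof. by move=> k0; rewrite /Tf k0 big_ord1 /= !expr0 !mulr1. Qed.

Lemma adj_const u w : k = 0%N -> adj u w -> (P0 u)`_0 = (P0 w)`_0.
Proof.
move=> k0 huw; have nu := deg_pos huw; have nw := deg_pos (adjC huw).
suff [p [i [hpu hpw pi]]] : exists p i, [/\ onl u p, onl w p & p i = 1].
  have := Tf_val (i:=i) nu hpu; rewrite pi oner_neq0 expr1n mulr1 Tf0 // => -> //.
  have := Tf_val (i:=i) nw hpw; rewrite pi oner_neq0 expr1n mulr1 Tf0 // => -> //.
case el: (lab u w) => [i|x y].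
  exists (ee i), i; split; last exact: ee_eq.
    by apply: pointLE; left; exists w.
  by apply: pointLE; left; exists u; split; [exact: adjC | rewrite -labC].
exists (fun j => ee x j + ee y j), x; split.
- exact: pointLD huw el.
- by apply: (pointLD (adjC huw)); rewrite -labC.
- by rewrite ee_eq ee_neq ?addr0 // (LD_neq huw el).
Qed.

Lemma path_const x s : k = 0%N -> path adj x s -> (P0 (last x s))`_0 = (P0 x)`_0.
Proof.
move=> k0; elim: s x => [|y s IH] x //= /andP [hxy hs].
by rewrite IH // (adj_const k0 hxy).
Qed.

Hypothesis hconn : connected_graph adj.

Lemma final_zero : k = 0%N -> exists H : {mpoly K[m]}, H \is k.-homog /\
  forall i, exists N : nat, inIC adj lab loopl ('X_i ^+ N * (H * 'X_i ^+ e i - F i)).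
Proof.
move=> k0; have [v0 _] := proj2 hdeg.
exists ((P0 v0)`_0 *: 1); split.
  by rewrite k0; apply: dhomogZ; exact: dhomog1.
move=> i; exists 1%N => v p hp.
rewrite rmorphM rmorphXn rmorphB rmorphM rmorphXn /= !mevalXU expr1 mevalZ meval1 mulr1.
have [->|pi0] := eqVneq (p i) 0; first by rewrite mul0r.
have n0 : dg v != 0%N.
  by apply: contraNneq pi0 => h; rewrite (deg0_triv h hp).
have := Tf_val n0 hp pi0; rewrite Tf0 // => <-.
have /connectP [s hs ->] := hconn v0 v.
by rewrite (path_const k0 hs) subrr mulr0.
Qed.

Lemma final_all : exists H : {mpoly K[m]}, H \is k.-homog /\
  forall i, exists N : nat, inIC adj lab loopl ('X_i ^+ N * (H * 'X_i ^+ e i - F i)).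
Proof.
case: (posnP k) => [k0|k0]; [exact: final_zero | exact: final_pos].
Qed.
End Graph.

End Aux.

Theorem theorem2p3 (K : closedFieldType) (hK : [pchar K] =i pred0)
  (V : finType) (adj : rel V) (n : nat)
  (lab : V -> V -> label n.+1) (loopl : V -> label n.+1) :
  connected_graph adj ->
  simple_graph adj ->
  degree_cond adj ->
  deg3_far adj ->
  triangle_free adj ->
  n%:Z = #|V|%:Z - genus adj ->
  admissible adj lab loopl ->
  forall k : nat, restriction_surjective adj lab loopl K k.
Proof.
move=> hconn hsimp hdeg hfar htri _ hadm k F e hgs.
by apply: (Aux.final_all hsimp hdeg hfar htri hadm hK hgs ord0 hconn).
Qed.
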